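(* Let $m\ge3$ and $s$ be odd positive integers, $n=sm$, and $\Gamma=C_n[mK_1]$. Define $$\sigma_1=(1,1,\dots,1,tc^{-1})r,\qquad \sigma_2=(t,\alpha_2,\alpha_3,\dots,\alpha_n)z \text{ with } \alpha_i=c^{(-1)^{i-1}(2i-3)}\ (2\le i\le n),$$ i.e. $\sigma_2=(t,c^{-1},c^{3},c^{-5},\dots,c^{5},c^{-3})z$, and $G=\langle\sigma_1,\sigma_2\rangle$. Then $\sigma_1$ has order $2n$, $\sigma_2$ has order $2m$, $\sigma_1\sigma_2$ has order $2$, and $|G|=4m^2n$.
   Context: $C_n[mK_1]$ is the graph with vertex set $\{1,\dots,n\}\times\{1,\dots,m\}$ in which $(i_1,j_1)$ is adjacent to $(i_2,j_2)$ if and only if $i_1\equiv i_2\pm1\pmod n$ (residues mod $n$ taken in $\{1,\dots,n\}$). Permutations act on the right ($x\alpha$ is the image of $x$) and products are composed left to right, both in $S_m$ and in $\mathrm{Aut}(\Gamma)$. For $\alpha_1,\dots,\alpha_n\in S_m$ and a permutation $x$ of $\{1,\dots,n\}$ in the dihedral group $D_n=\langle r,z\rangle$, $(\alpha_1,\dots,\alpha_n)x$ denotes the automorphism of $\Gamma$ mapping $(i,j)\mapsto(ix,\,j\alpha_i)$; $1$ denotes an identity permutation. Here $c=(1\,2\,\cdots\,m)\in S_m$; $t\in S_m$ fixes $1$ and maps $j\mapsto m-j+2$ for $2\le j\le m$; $r$ is the permutation $i\mapsto i+1 \pmod n$ of $\{1,\dots,n\}$; and $z$ fixes $1$ and maps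 $j\mapsto n-j+2$ for $2\le j\le n$. *)

(* Defs.v *)
From mathcomp Require Import all_boot all_order all_fingroup.
Set Implicit Arguments. Unset Strict Implicit. Unset Printing Implicit Defensive.

Local Open Scope group_scope.

(* Conventions: the vertex (i,j) of C_n[mK_1], 1<=i<=n, 1<=j<=m, is encoded
   as the pair (i-1, j-1) : 'I_n * 'I_m  (0-based indices).
   MathComp permutations compose left to right: (p * q) x = q (p x),
   matching the paper's convention. *)

Definition adjC (n m : nat) (u v : 'I_n * 'I_m) : bool :=
  ((u.1.+1 %% n) == v.1) || ((v.1.+1 %% n) == u.1).

Fact negmod_subproof k (i : 'I_k) : (k - i) %% k < k.
Proof. by rewrite ltn_pmod // (leq_ltn_trans (leq0n i) (ltn_ord i)). Qed.
Definition negmod k (i : 'I_k) : 'I_k := Ordinal (negmod_subproof i).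

Lemma negmodK k : involutive (@negmod k).
Proof.
move=> i; apply/val_inj => /=.
have k0 : 0 < k by rewrite (leq_ltn_trans (leq0n i) (ltn_ord i)).
case: (posnP i) => [->|ip].
  by rewrite subn0 modnn subn0 modnn.
rewrite (@modn_small (k - i)); last by rewrite ltn_subrL ip k0.
by rewrite subKn ?modn_small // ltnW.
Qed.

Lemma negmod_inj k : injective (@negmod k).
Proof. exact: inv_inj (@negmodK k). Qed.

Definition cperm (m : nat) : {perm 'I_m} := perm (@ordS_inj m).
(* t : fixes 1, j |-> m-j+2  (0-based: j |-> -j mod m) *)
Definition tperm_ (m : nat) : {perm 'I_m} := perm (@negmod_inj m).
Definition rperm (n : nat) : {perm 'I_n} := perm (@ordS_inj n).
(* z : fixes 1, i |-> n-i+2 *)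
Definition zperm (n : nat) : {perm 'I_n} := perm (@negmod_inj n).

(* (alpha_1,...,alpha_n) x : (i,j) |-> (i x, j alpha_i) *)
Definition wr_fun n m (a : 'I_n -> {perm 'I_m}) (x : {perm 'I_n})
  (v : 'I_n * 'I_m) : 'I_n * 'I_m := (x v.1, a v.1 v.2).

Lemma wr_fun_inj n m a x : injective (@wr_fun n m a x).
Proof.
move=> [i j] [i' j'] [/perm_inj ei]; subst i' => /perm_inj -> //.
Qed.

Definition wr n m a x : {perm 'I_n * 'I_m} := perm (@wr_fun_inj n m a x).

Definition sigma1 (n m : nat) : {perm 'I_n * 'I_m} :=
  wr (fun i : 'I_n => if (i.+1 == n)%N then tperm_ m * (cperm m)^-1 else 1)
     (rperm n).

(* sigma_2 = (t, alpha_2, ..., alpha_n) z,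
   alpha_k = c^((-1)^(k-1) (2k-3)) for 2 <= k <= n (k = 1-based index) *)
Definition alpha2 (m : nat) (k : nat) : {perm 'I_m} :=
  if k == 1%N then tperm_ m
  else (if odd (k - 1) then (cperm m)^-1 else cperm m) ^+ (2 * k - 3)%N.

Definition sigma2 (n m : nat) : {perm 'I_n * 'I_m} :=
  wr (fun i : 'I_n => alpha2 m i.+1) (zperm n).

(* Main.v *)
Require Import Defs.
From mathcomp Require Import all_boot all_order all_algebra all_fingroup all_solvable.
From mathcomp Require Import ring zify.
Set Implicit Arguments. Unset Strict Implicit. Unset Printing Implicit Defensive.
Import GRing.Theory Num.Theory.

Section Aff.
Local Open Scope ring_scope.

Definition toI (k : nat) (x : int) : 'I_k.+1 := inord (absz (x %% k.+1)%Z).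

Lemma toIE k x : ((toI k x : nat) : int) = (x %% k.+1)%Z.
Proof.
rewrite /toI inordK; first by rewrite gez0_abs // modz_ge0.
by rewrite -ltz_nat gez0_abs ?modz_ge0 // ltz_pmod.
Qed.

Lemma toI_eqP k x y : toI k x = toI k y <-> (k.+1%:Z %| x - y)%Z.
Proof.
rewrite -eqz_mod_dvd; split=> [h|].
  by rewrite -[(x %% _)%Z]toIE -[(y %% _)%Z]toIE h.
by move/eqP=> h; apply: ord_inj; apply/eqP; rewrite -eqz_nat !toIE h.
Qed.

Lemma toI_val k (i : 'I_k.+1) : toI k i = i.
Proof.
apply: ord_inj; apply/eqP; rewrite -eqz_nat; rewrite toIE modz_small //.
by rewrite ltz_nat ltn_ord andbT.
Qed.

Lemma toI_dvd k (d : nat) x : (d %| k.+1)%N -> (d%:Z %| x - ((toI k x : nat) : int))%Z.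
Proof.
move=> dk; rewrite toIE {1}(divz_eq x k.+1) addrK.
exact: dvdz_mull.
Qed.

Lemma ord_dvd k (i j : 'I_k.+1) : (k.+1%:Z %| i%:Z - j%:Z)%Z -> i = j.
Proof. by move/toI_eqP; rewrite !toI_val. Qed.

Definition sgb (b : bool) : int := if b then -1 else 1.
Lemma sgbM b1 b2 : sgb (b1 (+) b2) = sgb b1 * sgb b2.
Proof. by case: b1; case: b2; rewrite /= ?mulN1r ?opprK ?mul1r. Qed.
Lemma sgb2 b : sgb b * sgb b = 1.
Proof. by case: b; rewrite /= ?mulN1r ?opprK ?mul1r. Qed.

Lemma dvdzN' (k x : int) : (k %| - x)%Z = (k %| x)%Z.
Proof. by rewrite !unfold_in abszN. Qed.

Lemma dvd_sgb k b x : (k %| sgb b * x)%Z = (k %| x)%Z.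
Proof. by case: b; rewrite /= ?mulN1r ?dvdzN' ?mul1r. Qed.


Section AffDef.
Variables (N M : nat).
Hypothesis mn : (M.+1 %| N.+1)%N.
Local Notation V := ('I_N.+1 * 'I_M.+1)%type.

Definition aff_fun (d : bool) (a : int) (e : bool) (l c : int) (v : V) : V :=
  (toI N (sgb d * (v.1 : nat)%:Z + a),
   toI M (sgb e * (v.2 : nat)%:Z + l * (v.1 : nat)%:Z + c)).

Lemma aff_inj d a e l c : injective (aff_fun d a e l c).
Proof.
move=> [i j] [i' j'] [/toI_eqP h1 /toI_eqP h2] /=.
have ei : i = i'.
  apply: ord_dvd; rewrite -(dvd_sgb _ d).
  by have <- : (sgb d * i + a) - (sgb d * i' + a) = sgb d * (i%:Z - i'%:Z) by ring.
subst i'; congr pair; apply: ord_dvd; rewrite -(dvd_sgb _ e).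
by have <- : (sgb e * j + l * i + c) - (sgb e * j' + l * i + c) = sgb e * (j%:Z - j'%:Z) by ring.
Qed.

Definition aff d a e l c : {perm V} := perm (@aff_inj d a e l c).

Lemma affE d a e l c v : aff d a e l c v = aff_fun d a e l c v.
Proof. by rewrite permE. Qed.

Lemma aff_mul d1 a1 e1 l1 c1 d2 a2 e2 l2 c2 :
  (aff d1 a1 e1 l1 c1 * aff d2 a2 e2 l2 c2)%g =
  aff (d1 (+) d2) (sgb d2 * a1 + a2) (e1 (+) e2)
      (sgb e2 * l1 + l2 * sgb d1) (sgb e2 * c1 + l2 * a1 + c2).
Proof.
apply/permP => -[i j]; rewrite permM !affE /aff_fun /=.
set x := sgb d1 * i + a1.
set y := sgb e1 * j + l1 * i + c1.
have [q hq] := dvdzP (@toI_dvd N N.+1 x (dvdnn N.+1)).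
have [q1 hq1] := dvdzP (@toI_dvd N M.+1 x mn).
have [q2 hq2] := dvdzP (@toI_dvd M M.+1 y (dvdnn M.+1)).
have E0 : ((toI N x : nat) : int) = x - q * N.+1 by rewrite -hq; ring.
have E1 : ((toI N x : nat) : int) = x - q1 * M.+1 by rewrite -hq1; ring.
have E2 : ((toI M y : nat) : int) = y - q2 * M.+1 by rewrite -hq2; ring.
congr pair; apply/toI_eqP; apply/dvdzP.
  by rewrite E0; exists (- sgb d2 * q); rewrite /x sgbM; ring.
rewrite E1 E2; exists (- sgb e2 * q2 - l2 * q1); rewrite /x /y !sgbM; ring.
Qed.

Lemma aff_eq d a e l c a' l' c' :
  (N.+1%:Z %| a - a')%Z -> (M.+1%:Z %| l - l')%Z -> (M.+1%:Z %| c - c')%Z ->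
  aff d a e l c = aff d a' e l' c'.
Proof.
move=> ha hl hc; apply/permP => -[i j]; rewrite !affE /aff_fun /=.
congr pair; apply/toI_eqP.
  by have -> : (sgb d * i + a) - (sgb d * i + a') = a - a' by ring.
have -> : (sgb e * j + l * i + c) - (sgb e * j + l' * i + c') = (l - l') * i + (c - c') by ring.
by rewrite rpredD // dvdz_mulr.
Qed.

Lemma aff1 : aff false 0 false 0 0 = 1%g.
Proof.
apply/permP => -[i j]; rewrite perm1 affE /aff_fun /= !mul1r !mul0r !addr0.
by rewrite !toI_val.
Qed.

Lemma aff_exp a l c k : l * a = 0 ->
  (aff false a false l c ^+ k)%g = aff false (a * k%:Z) false (l * k%:Z) (c * k%:Z).
Proof.
move=> la; elim: k => [|k IH]; first by rewrite expg0 !mulr0 aff1.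
rewrite expgSr IH aff_mul /= intS; congr aff; rewrite ?mul1r; try ring.
by rewrite mulrA la mul0r; ring.
Qed.

End AffDef.

Lemma dvdW (k x q : int) : x = q * k -> (k %| x)%Z.
Proof. by move->; apply: dvdz_mull; apply: dvdzz. Qed.

Lemma toI_ord k x (i : 'I_k.+1) : toI k x = i -> (k.+1%:Z %| x - i%:Z)%Z.
Proof. by rewrite -{1}(toI_val i) => /toI_eqP. Qed.

Lemma dvd2_small k : (2 < k)%N -> ~~ (k%:Z %| (2%R : int))%Z.
Proof. move=> k2; rewrite dvdzE /=; apply/negP => /dvdn_leq H; have := H isT; lia. Qed.

Lemma sgb_dvd k b b' : (2 < k)%N -> (k%:Z %| sgb b - sgb b')%Z -> b = b'.
Proof.
move=> k2; case: b; case: b' => //= h; exfalso; move: h; apply/negP.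
  by rewrite (_ : -1 - 1 = - 2) // dvdzN' dvd2_small.
by rewrite (_ : 1 - -1 = 2) // dvd2_small.
Qed.

Section Ord.
Local Open Scope group_scope.
Lemma order_by (gT : finGroupType) (x : gT) k :
  (forall q, (x ^+ q == 1)%g = (k %| q)%N) -> #[x]%g = k.
Proof.
move=> H; apply/eqP; rewrite eqn_dvd order_dvdn H dvdnn /= -H.
by rewrite expg_order.
Qed.

Lemma order_double (gT : finGroupType) (x : gT) k :
  #[x ^+ 2]%g = k -> (forall q, ((x ^+ 2) ^+ q * x != 1)%g) -> #[x]%g = (2 * k)%N.
Proof.
move=> ok odd_ne; apply/eqP; rewrite eqn_dvd order_dvdn expgM.
rewrite -{1}ok expg_order eqxx /=.
have hd := expg_order x.
rewrite -(odd_double_half #[x]) in hd *.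
case Ho: (odd #[x]) hd => /= hd.
  by move: (odd_ne #[x]./2); rewrite -expgM -expgSr mul2n add1n hd eqxx.
rewrite add0n -mul2n dvdn_pmul2l // -ok order_dvdn -expgM.
by rewrite mul2n hd.
Qed.

End Ord.

Section Sig.
Variables h g : nat.
Hypotheses (h1 : (0 < h)%N) (g1 : (0 < g)%N) (mn : (g.*2.+1 %| h.*2.+1)%N).
Local Notation N := h.*2.
Local Notation M := g.*2.
Local Notation A := (aff N M).

Lemma nE : (N.+1 : int) = 2 * h%:Z + 1.
Proof. by rewrite -mul2n -addn1 PoszD PoszM. Qed.
Lemma mE : (M.+1 : int) = 2 * g%:Z + 1.
Proof. by rewrite -mul2n -addn1 PoszD PoszM. Qed.

Lemma aff_fix d a e l c : A d a e l c = 1%g -> forall v, @aff_fun N M d a e l c v = v.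
Proof. by move=> H v; rewrite -affE H perm1. Qed.

Lemma one_n : (1 < N.+1)%N. Proof. lia. Qed.
Lemma one_m : (1 < M.+1)%N. Proof. lia. Qed.

Lemma aff_neq_d a e l c : (A true a e l c != 1)%g.
Proof.
apply/eqP=> H; have [/toI_ord H0 _] := aff_fix H (ord0, ord0).
have [/toI_ord H1 _] := aff_fix H (inord 1, ord0).
move: H0 H1; rewrite /= inordK ?one_n // => H0 H1.
have : (N.+1%:Z %| (2%R : int))%Z.
  have -> : (2%R : int) = (-1 * 0%Z + a - 0%Z) - (-1 * 1%Z + a - 1%Z) by ring.
  exact: rpredB H0 H1.
by apply/negP; apply: dvd2_small; lia.
Qed.

Lemma aff_neq_e d a l c : (A d a true l c != 1)%g.
Proof.
apply/eqP=> H; have [_ /toI_ord H0] := aff_fix H (ord0, ord0).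
have [_ /toI_ord H1] := aff_fix H (ord0, inord 1).
move: H0 H1; rewrite /= inordK ?one_m // => H0 H1.
have : (M.+1%:Z %| (2%R : int))%Z.
  have -> : (2%R : int) = (-1 * 0%Z + l * 0%Z + c - 0%Z) - (-1 * 1%Z + l * 0%Z + c - 1%Z) by ring.
  exact: rpredB H0 H1.
by apply/negP; apply: dvd2_small; lia.
Qed.


Ltac dz q := apply: (dvdW (q := q)); rewrite /= ?nE ?mE; ring.

Definition S1 := A false 1 true 0 (-1).
Definition S2 := A true 0 true (-2) 0.

Lemma S1sq : (S1 * S1)%g = A false 2 false 0 0.
Proof. rewrite /S1 (aff_mul mn) /=; apply: aff_eq; dz (0:int). Qed.

Lemma S2sq : (S2 * S2)%g = A false 0 false 4 0.
Proof. rewrite /S2 (aff_mul mn) /=; apply: aff_eq; dz (0:int). Qed.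

Lemma S12sq : ((S1 * S2) * (S1 * S2))%g = 1%g.
Proof. rewrite /S1 /S2 !(aff_mul mn) /= -aff1; apply: aff_eq; dz (0:int). Qed.

Lemma is1_a a : (A false a false 0 0 == 1)%g = (N.+1%:Z %| a)%Z.
Proof.
apply/eqP/idP => [H|Ha].
  have [/toI_ord H0 _] := aff_fix H (ord0, ord0).
  by move: H0; rewrite /= mul1r add0r subr0.
rewrite -aff1; apply: aff_eq; rewrite ?subr0 //; dz (0:int).
Qed.

Lemma is1_l l : (A false 0 false l 0 == 1)%g = (M.+1%:Z %| l)%Z.
Proof.
apply/eqP/idP => [H|Ha].
  have [_ /toI_ord H0] := aff_fix H (inord 1, ord0).
  by move: H0; rewrite /= inordK ?one_n // mul1r add0r addr0 mulr1 subr0.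
rewrite -aff1; apply: aff_eq; rewrite ?subr0 //; dz (0:int).
Qed.

Lemma oddn : odd N.+1. Proof. by rewrite /= odd_double. Qed.
Lemma oddm : odd M.+1. Proof. by rewrite /= odd_double. Qed.

Lemma orderS1 : #[S1]%g = (2 * N.+1)%N.
Proof.
apply: order_double.
  rewrite expgS expg1 S1sq; apply: order_by => q.
  rewrite aff_exp ?mul0r // is1_a -PoszM dvdzE /=.
  by rewrite Gauss_dvdr // coprimen2 oddn.
move=> q; rewrite expgS expg1 S1sq aff_exp ?mul0r // /S1 (aff_mul mn) /=.
exact: aff_neq_e.
Qed.

Lemma orderS2 : #[S2]%g = (2 * M.+1)%N.
Proof.
apply: order_double.
  rewrite expgS expg1 S2sq; apply: order_by => q.
  rewrite aff_exp ?mulr0 // mul0r is1_l -PoszM dvdzE /=.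
  have cop : coprime M.+1 2 by rewrite coprimen2 oddm.
  by rewrite (_ : (1 + (1 + (1 + 1)))%N = 2 * 2)%N // -mulnA !Gauss_dvdr.
move=> q; rewrite expgS expg1 S2sq aff_exp ?mulr0 // /S2 (aff_mul mn) /=.
exact: aff_neq_d.
Qed.

Lemma orderS12 : #[(S1 * S2)%g]%g = 2%N.
Proof.
have d2 : (#[(S1 * S2)%g]%g %| 2)%N by rewrite order_dvdn expgS expg1 S12sq.
have n1 : #[(S1 * S2)%g]%g != 1%N.
  rewrite order_eq1 /S1 /S2 (aff_mul mn) /=; exact: aff_neq_d.
have := dvdn_leq (isT : (0 < 2)%N) d2; have := order_gt0 (S1 * S2)%g; move: n1; lia.
Qed.


Lemma two_n : (2 < N.+1)%N. Proof. rewrite -addnn; lia. Qed.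
Lemma two_m : (2 < M.+1)%N. Proof. rewrite -addnn; lia. Qed.

Lemma dvd_ring k x y : (k %| x)%Z -> x = y -> (k %| y)%Z.
Proof. by move=> H <-. Qed.

Local Notation P := (bool * 'I_N.+1 * bool * 'I_M.+1 * 'I_M.+1)%type.
Definition affp (p : P) :=
  A p.1.1.1.1 (p.1.1.1.2 : nat)%:Z p.1.1.2 (p.1.2 : nat)%:Z (p.2 : nat)%:Z.
Definition Aset := [set affp p | p : P].

Lemma affp_inj : injective affp.
Proof.
move=> [[[[d a] e] l] c] [[[[d' a'] e'] l'] c'] /= H.
have := congr1 (fun s : {perm _} => s (ord0, ord0)) H.
rewrite /affp /= !affE /aff_fun /= => -[/toI_eqP Ha /toI_eqP Hc].
have := congr1 (fun s : {perm _} => s (inord 1, ord0)) H.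
rewrite /affp /= !affE /aff_fun /= inordK ?one_n // => -[/toI_eqP Hd /toI_eqP Hl].
have := congr1 (fun s : {perm _} => s (ord0, inord 1)) H.
rewrite /affp /= !affE /aff_fun /= inordK ?one_m // => -[_ /toI_eqP He].
have ea : a = a' by apply: ord_dvd; apply: (dvd_ring Ha); ring.
have ec : c = c' by apply: ord_dvd; apply: (dvd_ring Hc); ring.
subst a' c'.
have ed : d = d'.
  by apply: (sgb_dvd (k := N.+1)); [exact: two_n | apply: (dvd_ring Hd); ring].
have ee : e = e'.
  by apply: (sgb_dvd (k := M.+1)); [exact: two_m | apply: (dvd_ring He); ring].
have el : l = l' by apply: ord_dvd; apply: (dvd_ring Hl); ring.
by subst.
Qed.

Lemma card_Aset : #|Aset| = (4 * M.+1 ^ 2 * N.+1)%N.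
Proof.
rewrite card_imset; last exact: affp_inj.
rewrite cardT -cardE !card_prod card_bool !card_ord.
rewrite (_ : 4 = 2 * 2)%N // expnS expn1; ring.
Qed.

Lemma aff_in d a e l c : A d a e l c \in Aset.
Proof.
apply/imsetP; exists (d, toI N a, e, toI M l, toI M c) => //.
by rewrite /affp /=; apply: aff_eq; apply: toI_dvd.
Qed.

Lemma Agroup : group_set Aset.
Proof.
apply/group_setP; split; first by rewrite -aff1; exact: aff_in.
move=> x y /imsetP[p _ ->] /imsetP[q _ ->]; rewrite (aff_mul mn); exact: aff_in.
Qed.

Lemma NE : (N : int) = 2 * h%:Z. Proof. by rewrite -mul2n PoszM. Qed.

Ltac dz2 q := apply: (dvdW (q := q)); rewrite /= ?nE ?mE ?NE ?intS; ring.

Lemma card_Gs : #|<<[set S1; S2]>>%g| = (4 * M.+1 ^ 2 * N.+1)%N.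
Proof.
set Gs := <<_>>%g.
suff -> : Gs = Aset by exact: card_Aset.
apply/eqP; rewrite eqEsubset; apply/andP; split.
  rewrite -(gen_set_id Agroup) genS //; apply/subsetP => x /set2P [] ->; exact: aff_in.
have s1 : S1 \in Gs by apply: mem_gen; rewrite !inE eqxx.
have s2 : S2 \in Gs by apply: mem_gen; rewrite !inE eqxx orbT.
have T1 : A false 1 false 0 0 \in Gs.
  have -> : A false 1 false 0 0 = ((S1 * S1) ^+ h.+1)%g.
    rewrite S1sq aff_exp ?mul0r //; apply: aff_eq; [dz2 (-1 : int)|dz2 (0:int)|dz2 (0:int)].
  by rewrite groupX // groupM.
have L1 : A false 0 false 1 0 \in Gs.
  have -> : A false 0 false 1 0 = (((S2 * S2) ^+ g.+1) ^+ g.+1)%g.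
    rewrite S2sq !aff_exp ?mulr0 //; apply: aff_eq; [dz2 (0:int)|dz2 (- (2 * g%:Z + 3))|dz2 (0:int)].
  by rewrite !groupX // groupM.
have R : A false 0 true 0 (-1) \in Gs.
  have -> : A false 0 true 0 (-1) = (S1 * (A false 1 false 0 0) ^+ N)%g.
    rewrite aff_exp ?mul0r // /S1 (aff_mul mn) /=; apply: aff_eq; [dz2 (-1 : int)|dz2 (0:int)|dz2 (0:int)].
  by rewrite groupM // groupX.
have W : A true 0 false 0 (-1) \in Gs.
  have -> : A true 0 false 0 (-1) = (S2 * A false 0 true 0 (-1) * (A false 0 false 1 0) ^+ 2)%g.
    rewrite aff_exp ?mul0r // /S2 !(aff_mul mn) /=; apply: aff_eq; dz2 (0:int).
  by rewrite !groupM // groupX.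
have C1 : A false 0 false 0 1 \in Gs.
  have -> : A false 0 false 0 1 = ((A true 0 false 0 (-1) * A true 0 false 0 (-1)) ^+ g)%g.
    have -> : (A true 0 false 0 (-1) * A true 0 false 0 (-1))%g = A false 0 false 0 (-2).
      rewrite (aff_mul mn) /=; apply: aff_eq; dz2 (0:int).
    rewrite aff_exp ?mulr0 //; apply: aff_eq; [dz2 (0:int)|dz2 (0:int)|dz2 (1:int)].
  by rewrite groupX // groupM.
have D1 : A true 0 false 0 0 \in Gs.
  have -> : A true 0 false 0 0 = (A true 0 false 0 (-1) * A false 0 false 0 1)%g.
    rewrite (aff_mul mn) /=; apply: aff_eq; dz2 (0:int).
  by rewrite groupM.
have E1 : A false 0 true 0 0 \in Gs.
  have -> : A false 0 true 0 0 = (A false 0 true 0 (-1) * A false 0 false 0 1)%g.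
    rewrite (aff_mul mn) /=; apply: aff_eq; dz2 (0:int).
  by rewrite groupM.
apply/subsetP => x /imsetP [[[[[d a] e] l] c] _ ->]; rewrite /affp /=.
have -> : A d a e l c = (A false 0 e 0 0 * A false 0 false l 0 * A d 0 false 0 0 *
     A false 0 false 0 c * A false a false 0 0)%g.
  rewrite !(aff_mul mn) /= ?addbF; apply: aff_eq; dz2 (0:int).
have -> : A false 0 false l 0 = ((A false 0 false 1 0) ^+ l)%g.
  by rewrite aff_exp ?mulr0 //; apply: aff_eq; dz2 (0:int).
have -> : A false 0 false 0 c = ((A false 0 false 0 1) ^+ c)%g.
  by rewrite aff_exp ?mulr0 //; apply: aff_eq; dz2 (0:int).
have -> : A false a false 0 0 = ((A false 1 false 0 0) ^+ a)%g.
  by rewrite aff_exp ?mul0r //; apply: aff_eq; dz2 (0:int).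
have Ee : A false 0 e 0 0 \in Gs by case: e; rewrite ?aff1 ?group1.
have Dd : A d 0 false 0 0 \in Gs by case: d; rewrite ?aff1 ?group1.
by rewrite !groupM ?groupX.
Qed.

End Sig.

Lemma modz_dvd' (k x : int) : (k %| (x %% k)%Z - x)%Z.
Proof.
rewrite {2}(divz_eq x k).
have -> : (x %% k)%Z - ((x %/ k)%Z * k + (x %% k)%Z) = -(x %/ k)%Z * k by ring.
by apply: dvdz_mull; apply: dvdzz.
Qed.

Lemma toI_addl k x y : toI k ((toI k x : nat)%:Z + y) = toI k (x + y).
Proof.
apply/toI_eqP; have H := @toI_dvd k k.+1 x (dvdnn _).
by rewrite -dvdzN' in H; apply: (dvd_ring H); ring.
Qed.

Lemma toI_mull k b x y : toI k (b * (toI k x : nat)%:Z + y) = toI k (b * x + y).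
Proof.
apply/toI_eqP; have := @toI_dvd k k.+1 x (dvdnn _) => H.
by apply: (dvd_ring (dvdz_mull (- b) H)); ring.
Qed.

Lemma ordSE k (i : 'I_k.+1) : ordS i = toI k (i%:Z + 1).
Proof.
rewrite -(toI_val (ordS i)); apply/toI_eqP.
have -> : ((ordS i : nat) : int) = (i.+1 %% k.+1)%N by [].
rewrite -modz_nat.
have -> : (i%:Z + 1) = i.+1%:Z by rewrite intS addrC.
exact: modz_dvd'.
Qed.

Lemma negmodE k (i : 'I_k.+1) : negmod i = toI k (- i%:Z).
Proof.
rewrite -(toI_val (negmod i)); apply/toI_eqP.
have -> : ((negmod i : nat) : int) = ((k.+1 - i) %% k.+1)%N by [].
rewrite -modz_nat.
apply: (dvd_ring (rpredD (modz_dvd' k.+1%:Z (k.+1 - i)%N) (dvdzz k.+1%:Z))).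
rewrite -subzn; last exact: ltnW (ltn_ord i).
ring.
Qed.

Lemma cpermXE k (j : 'I_k.+1) q : ((cperm k.+1) ^+ q)%g j = toI k (j%:Z + q%:Z).
Proof.
elim: q => [|q IH]; first by rewrite expg0 perm1 addr0 toI_val.
rewrite expgSr permM IH /cperm permE ordSE toI_addl intS; congr toI; ring.
Qed.

Lemma cpermVE k (j : 'I_k.+1) : ((cperm k.+1)^-1)%g j = toI k (j%:Z - 1).
Proof.
apply: (@perm_inj _ (cperm k.+1)); rewrite permKV /cperm permE ordSE toI_addl.
by rewrite subrK toI_val.
Qed.

Lemma cpermVXE k (j : 'I_k.+1) q : (((cperm k.+1)^-1) ^+ q)%g j = toI k (j%:Z - q%:Z).
Proof.
elim: q => [|q IH]; first by rewrite expg0 perm1 subr0 toI_val.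
rewrite expgSr permM IH cpermVE toI_addl intS; congr toI; ring.
Qed.


Definition w (i : nat) : int := sgb (odd i).
Definition bt (i : nat) : int := if odd i then -1 else 0.

Section Conj.
Variables h g : nat.
Hypotheses (h1 : (0 < h)%N) (g1 : (0 < g)%N) (mn : (g.*2.+1 %| h.*2.+1)%N).
Local Notation N := h.*2.
Local Notation M := g.*2.
Local Notation A := (@aff N M).
Local Notation V := ('I_N.+1 * 'I_M.+1)%type.

Definition phi_fun (v : V) : V := (v.1, toI M (w v.1 * (v.2 : nat)%:Z + bt v.1)).

Lemma phi_inj : injective phi_fun.
Proof.
move=> [i j] [i' j'] [ei /toI_eqP H] /=; subst i'; congr pair.
apply: ord_dvd; rewrite -(dvd_sgb _ (odd i)); apply: (dvd_ring H); rewrite /w; ring.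
Qed.

Definition phi : {perm V} := perm phi_inj.

Lemma sig1_phi : (sigma1 N.+1 M.+1 * phi)%g = (phi * S1 h g)%g.
Proof.
apply/permP => -[i j]; rewrite !permM /sigma1 /wr /phi /S1 !permE.
rewrite /wr_fun /phi_fun /aff_fun /=; congr pair.
  by rewrite /rperm permE ordSE mul1r.
rewrite mul0r addr0 toI_mull /rperm permE.
case: eqP => [iN|iN].
  have -> : (ordS i : nat) = 0%N by rewrite /= iN modnn.
  have -> : (i : nat) = N by case: iN.
  rewrite permM cpermVE /tperm_ permE negmodE toI_addl /w /bt /= odd_double /=.
  by rewrite toI_mull; congr toI; ring.
have -> : (ordS i : nat) = i.+1 by rewrite /= modn_small //; have := ltn_ord i; lia.
rewrite perm1 /w /bt /=; case: (odd i) => /=; congr toI; ring.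
Qed.


Lemma sig2_phi : (sigma2 N.+1 M.+1 * phi)%g = (phi * S2 h g)%g.
Proof.
apply/permP => -[i j]; rewrite !permM /sigma2 /wr /phi /S2 !permE.
rewrite /wr_fun /phi_fun /aff_fun /=; congr pair.
  by rewrite /zperm permE negmodE; congr toI; ring.
rewrite addr0 toI_mull /zperm permE.
case: (posnP i) => [i0|ipos].
  have -> : (negmod i : nat) = 0%N by rewrite /= i0 subn0 modnn.
  rewrite i0 /alpha2 /= /tperm_ permE negmodE.
  by rewrite toI_mull /w /bt /=; congr toI; ring.
have -> : (negmod i : nat) = (N.+1 - i)%N.
  by rewrite /= modn_small //; have := ltn_ord i; lia.
rewrite /w /bt oddB ?(ltnW (ltn_ord i)) // /= odd_double /=.
rewrite /alpha2; have -> : (i.+1 == 1)%N = false by apply/eqP; lia.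
rewrite subn1 /=.
have ek : ((2 * i.+1 - 3)%N : int) = 2 * i%:Z - 1.
  by rewrite -subzn ?PoszM ?intS; [ring | lia].
case: (odd i) => /=; rewrite ?cpermVXE ?cpermXE ek toI_mull; congr toI; ring.
Qed.

End Conj.
End Aff.

Lemma conj_eq (gT : finGroupType) (x p y : gT) : (x * p = p * y)%g -> (x ^ p)%g = y.
Proof. by move=> H; rewrite conjgE H mulKg. Qed.

Theorem lemma5p1 (m s n : nat) (Hm : 3 <= m) (Hmo : odd m) (Hs : 0 < s)
  (Hso : odd s) (Hn : n = s * m) :
  [/\ #[sigma1 n m]%g = 2 * n,
      #[sigma2 n m]%g = 2 * m,
      #[(sigma1 n m * sigma2 n m)%g]%g = 2
    & #|<<[set sigma1 n m; sigma2 n m]>>%g| = 4 * m ^ 2 * n].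
Proof.
have Hno : odd n by rewrite Hn oddM Hso Hmo.
have mn : (m %| n)%N by rewrite Hn dvdn_mull.
have mlen : (m <= n)%N by rewrite Hn leq_pmull.
have em : m = (m./2).*2.+1 by rewrite -[m in LHS]odd_double_half Hmo.
have en : n = (n./2).*2.+1 by rewrite -[n in LHS]odd_double_half Hno.
move: (m./2) (n./2) em en => g h em en; subst m; clear Hn Hno; subst n.
have g1 : (0 < g)%N by move: Hm; rewrite -addnn; lia.
have h1 : (0 < h)%N by move: Hm mlen; rewrite -!addnn; lia.
have c1 := conj_eq (sig1_phi h1 g1 mn).
have c2 := conj_eq (sig2_phi h1 g1 mn).
split.
- by rewrite -(orderJ _ (phi h g)) c1 orderS1.
- by rewrite -(orderJ _ (phi h g)) c2 orderS2.
- by rewrite -(orderJ _ (phi h g)) conjMg c1 c2 orderS12.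
- rewrite -(cardJg _ (phi h g)) -genJ conjUg !conjg_set1 c1 c2.
  exact: card_Gs.
Qed.
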